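(* Let $\alpha=c+d\rho\in\mathbb{Z}[\rho]$ with $7\le N(\alpha)\equiv 1 \pmod 6$, and suppose $\alpha$ is not an associate of any (rational) integer. Let $\ell=\gcd(c,d)$, $c'=c/\ell$, $d'=d/\ell$ and $\alpha'=c'+d'\rho$. Then $EJ_\alpha$ is an $\ell^2$-fold cover of a 6-valent first-kind Frobenius circulant (with cyclic kernel) that is isomorphic to $EJ_{\alpha'}$.
   Context: $\rho=(1+\sqrt{-3})/2$, $\mathbb{Z}[\rho]=\{x+y\rho: x,y\in\mathbb{Z}\}$ with norm $N(x+y\rho)=x^2+xy+y^2$; $\alpha,\beta$ are associates if $\alpha=\beta\rho^j$ for some integer $j$. For $N(\gamma)\ge 7$, $EJ_\gamma$ is the Cayley graph on the additive group of $\mathbb{Z}[\rho]/(\gamma)$ with connection set $\{\pm[1]_\gamma,\pm[\rho]_\gamma,\pm[\rho^2]_\gamma\}$. A $k$-fold cover of $\Gamma_2$ by $\Gamma_1$ is a surjection $V(\Gamma_1)\to V(\Gamma_2)$ restricting to bijections between neighbourhoods, with all fibres of size $k$. For $n\ge 7$, $TL_n(a,b,c)$ is the Cayley graph on $\mathbb{Z}_n$ with connection set $\{\pm[a],\pm[b],\pm[c]\}$ (these six residues distinct). A Frobenius group is a transitive, non-regular permutation group in which only the identity fixes two points; a finite one is $K\rtimes H$ with regular normal kernel $K$ and point stabiliser $H$ acting on $K$ by conjugation. A first-kind $K\rtimes H$-Frobenius graph is $\mathrm{Cay}(K,s^H)$ with $\langle s^H\rangle=K$ and $|H|$ even or $s$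 an involution. A 6-valent first-kind Frobenius circulant with cyclic kernel is a 6-valent $TL_n(a,b,c)$ that is a first-kind $\mathbb{Z}_n\rtimes H$-Frobenius graph for some $H\le\mathbb{Z}_n^*$ with $\mathbb{Z}_n\rtimes H$ (acting by $[x]^{([y],[m])}=[(x+y)m]$) Frobenius with kernel $\mathbb{Z}_n$. *)

(* Defs.v *)
From HB Require Import structures.
From mathcomp Require Import all_boot all_order all_algebra all_fingroup.
Unset Printing Implicit Defensive.
Import GRing.Theory Num.Theory.
Local Open Scope ring_scope.

(* Elements x + y*rho of Z[rho] are represented as pairs (x, y) of integers,
   rho = (1 + sqrt(-3))/2, rho^2 = rho - 1. *)
Definition zr := (int * int)%type.
Definition zmul (p q : zr) : zr :=
  (p.1 * q.1 - p.2 * q.2, p.1 * q.2 + p.2 * q.1 + p.2 * q.2).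
Definition zone : zr := (1, 0).
Definition zrho : zr := (0, 1).
Definition zpow (p : zr) (j : nat) : zr := iter j (zmul p) zone.
Definition znorm (p : zr) : int := p.1 ^+ 2 + p.1 * p.2 + p.2 ^+ 2.
Definition zassoc (a b : zr) : Prop := exists j : nat, a = zmul b (zpow zrho j).

Record fgraph := FGraph { gT : finType; gV : {set gT}; gadj : rel gT }.
Arguments gV : clear implicits.
Arguments gadj : clear implicits.

Definition nbhd (G : fgraph) (v : gT G) : {set gT G} :=
  [set u in gV G | gadj G v u].

Definition is_cover (G1 G2 : fgraph) (k : nat) (f : gT G1 -> gT G2) : Prop :=
  [/\ f @: gV G1 = gV G2,
      (forall v, v \in gV G1 ->
         f @: nbhd G1 v = nbhd G2 (f v) /\ {in nbhd G1 v &, injective f} )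
    & (forall w, w \in gV G2 -> #|[set v in gV G1 | f v == w]| = k)].

Definition covers (G1 G2 : fgraph) (k : nat) : Prop :=
  exists f : gT G1 -> gT G2, is_cover G1 G2 k f.

Definition isomorphic (G1 G2 : fgraph) : Prop :=
  exists f : gT G1 -> gT G2,
    [/\ {in gV G1 &, injective f}, f @: gV G1 = gV G2
      & {in gV G1 &, forall u v, gadj G2 (f u) (f v) = gadj G1 u v}].

(* Since N(gamma) lies in the ideal (gamma), Z[rho]/(gamma) is the quotient of
   (Z_n)^2 (n = N(gamma)) by the image of the ideal; vertices are its cosets. *)
Definition ZR (n : nat) := ('Z_n * 'Z_n)%type.
Definition zr_to (n : nat) (x : zr) : ZR n := (x.1%:~R, x.2%:~R).
Definition zmulZ (n : nat) (p q : ZR n) : ZR n :=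
  (p.1 * q.1 - p.2 * q.2, p.1 * q.2 + p.2 * q.1 + p.2 * q.2).
Definition EJideal (n : nat) (g : zr) : {set ZR n} :=
  [set zmulZ n (zr_to n g) z | z : ZR n].
Definition EJcoset (n : nat) (g : zr) (x : ZR n) : {set ZR n} :=
  [set x + i | i in EJideal n g].
(* connection set {+-1, +-rho, +-rho^2}, rho^2 = -1 + rho *)
Definition EJconn (n : nat) : {set ZR n} :=
  [set:: map (zr_to n) [:: (1, 0); (-1, 0); (0, 1); (0, -1); (-1, 1); (1, -1)]].
Definition EJ (g : zr) : fgraph :=
  let n := `|znorm g|%N in
  @FGraph {set ZR n} [set EJcoset n g x | x : ZR n]
    (fun C D => [exists x, [exists y,
        [&& x \in C, y \in D & (y - x) \in EJconn n]]]).

Definition TLconn (n : nat) (a b c : 'Z_n) : {set 'Z_n} := [set a; -a; b; -b; c; -c].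
Definition TL (n : nat) (a b c : 'Z_n) : fgraph :=
  @FGraph 'Z_n [set: 'Z_n] (fun x y => (y - x) \in TLconn n a b c).

Definition sdact (n : nat) (y : 'Z_n) (m : {unit 'Z_n}) (x : 'Z_n) : 'Z_n :=
  (x + y) * val m.

(* Z_n x| H is a Frobenius group (transitive, non-regular, only the identity
   fixes two points) with kernel Z_n (the Frobenius kernel, i.e. the identity
   together with the fixed-point-free elements, is exactly the set of
   translations). *)
Definition frobenius_ZnH (n : nat) (H : {group {unit 'Z_n}}) : Prop :=
  [/\ (forall x z : 'Z_n, exists y m, m \in H /\ sdact n y m x = z),
      (exists y m x, [/\ m \in H, sdact n y m x = x & exists x', sdact n y m x' != x']),
      (forall y m, m \in H -> forall x1 x2, x1 != x2 ->
          sdact n y m x1 = x1 -> sdact n y m x2 = x2 -> forall x, sdact n y m x = x)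
    & (forall y m, m \in H ->
          ((forall x, sdact n y m x = x) \/ (forall x, sdact n y m x != x)) <->
          (exists t, forall x, sdact n y m x = x + t))].

Definition frob_first_kind_circ (n : nat) (a b c : 'Z_n) : Prop :=
  exists (H : {group {unit 'Z_n}}) (s : 'Z_n),
    let sH := [set s * val h | h in H] in
    [/\ frobenius_ZnH n H,
        sH = TLconn n a b c,
        <<sH>>%g = [set: 'Z_n]
      & (~~ odd #|H| \/ (s != 0 /\ s + s = 0))].

(* Main.v *)
Require Import Defs.
From HB Require Import structures.
From mathcomp Require Import all_boot all_order all_algebra all_fingroup.
From mathcomp Require Import ring zify.
Import GRing.Theory Num.Theory.
Local Open Scope ring_scope.
Set Implicit Arguments.
Unset Strict Implicit.

Lemma card_fibers (A B : finType) (h : A -> B) (S : {set A}) k :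
  (forall x, x \in S -> #|[set y in S | h y == h x]| = k) ->
  #|S| = (#|h @: S| * k)%N.
Proof.
move=> H.
have -> : #|S| = (\sum_(b in h @: S) #|[set y in S | h y == b]|)%N.
  rewrite -sum1_card (partition_big h (fun b => b \in h @: S)) /=; last first.
    by move=> x xS; apply: imset_f.
  apply: eq_bigr => b _; rewrite -sum1_card; apply: eq_bigl => y.
  by rewrite inE.
rewrite (eq_bigr (fun _ => k)) ?sum_nat_const // => b /imsetP [x xS ->].
exact: H.
Qed.

Lemma uniq_map_inj (T1 T2 : eqType) (f : T1 -> T2) (s : seq T1) x y :
  uniq (map f s) -> x \in s -> y \in s -> f x = f y -> x = y.
Proof.
elim: s => [|z s IH] //= /andP [nz us].
rewrite !inE => /orP [/eqP->|xs] /orP [/eqP->|ys] //.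
- by move=> E; move: nz; rewrite E map_f.
- by move=> E; move: nz; rewrite -E map_f.
- exact: IH.
Qed.

Lemma intZp0 (m : nat) (k : int) : (1 < m)%N ->
  ((k%:~R : 'Z_m) == 0) = (m%:Z %| k)%Z.
Proof.
move=> m1.
have Hn : forall j : nat, ((j%:R : 'Z_m) == 0) = (m %| j)%N.
  move=> j; apply/eqP/idP => [H|H].
    have := val_Zp_nat m1 j; rewrite H /= => /esym/eqP.
    by rewrite -/(dvdn m j) => ->.  
  by apply: val_inj; rewrite /= val_Zp_nat // (eqP H).
case: k => j.
  by rewrite -[(Posz j)%:~R]/(j%:R) Hn.
rewrite dvdzE /= NegzE mulrNz oppr_eq0 -[(Posz j.+1)%:~R]/(j.+1%:R) Hn.
by [].
Qed.
Definition zconj (p : zr) : zr := (p.1 + p.2, - p.2).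
Definition lift (m : nat) (x : ZR m) : zr := ((nat_of_ord x.1)%:Z, (nat_of_ord x.2)%:Z).
Arguments lift {m}.

Lemma zr_toM m p q : zr_to m (zmul p q) = zmulZ m (zr_to m p) (zr_to m q).
Proof. by rewrite /zr_to /zmul /zmulZ /=; congr pair; rewrite ?(intrD, intrM, intrB, mulrNz). Qed.

Lemma zr_to_lift m (x : ZR m) : zr_to m (lift x) = x.
Proof. by case: x => a b; rewrite /zr_to /lift /= -!pmulrn !natr_Zp. Qed.

Lemma zr_toD m p q : zr_to m (p.1 + q.1, p.2 + q.2) = zr_to m p + zr_to m q.
Proof. by rewrite /zr_to /= !intrD. Qed.

Lemma zr_toB m p q : zr_to m (p.1 - q.1, p.2 - q.2) = zr_to m p - zr_to m q.
Proof. by rewrite /zr_to /= !intrB. Qed.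

Lemma zr_to0 m p : (1 < m)%N ->
  (zr_to m p == 0) = (m%:Z %| p.1)%Z && (m%:Z %| p.2)%Z.
Proof.
by move=> m1; rewrite /zr_to -!intZp0.
Qed.

Lemma zmulZDr m p y z : zmulZ m p (y + z) = zmulZ m p y + zmulZ m p z.
Proof. by case: p y z => [? ?] [? ?] [? ?]; rewrite /zmulZ /=; congr pair => /=; ring. Qed.

Lemma zmulZNr m p y : zmulZ m p (- y) = - zmulZ m p y.
Proof. by case: p y => [? ?] [? ?]; rewrite /zmulZ /=; congr pair => /=; ring. Qed.

Lemma zmulZ0r m p : zmulZ m p 0 = 0.
Proof. by rewrite /zmulZ /=; congr pair => /=; ring. Qed.

Lemma zmulZA m p q z : zmulZ m p (zmulZ m q z) = zmulZ m (zmulZ m p q) z.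
Proof. by rewrite /zmulZ /=; congr pair => /=; ring. Qed.

Lemma zmulZC m p q : zmulZ m p q = zmulZ m q p.
Proof. by rewrite /zmulZ /=; congr pair => /=; ring. Qed.

Lemma mem_ideal m g x :
  reflect (exists z, x = zmulZ m (zr_to m g) z) (x \in EJideal m g).
Proof.
apply: (iffP imsetP) => [[z _ ->]|[z ->]]; by exists z.
Qed.

Lemma ideal0 m g : 0 \in EJideal m g.
Proof. by apply/mem_ideal; exists 0; rewrite zmulZ0r. Qed.

Lemma idealD m g x y : x \in EJideal m g -> y \in EJideal m g -> x + y \in EJideal m g.
Proof.
move=> /mem_ideal [z1 ->] /mem_ideal [z2 ->]; apply/mem_ideal; exists (z1 + z2).
by rewrite zmulZDr.
Qed.

Lemma idealN m g x : x \in EJideal m g -> - x \in EJideal m g.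
Proof.
move=> /mem_ideal [z1 ->]; apply/mem_ideal; exists (- z1); by rewrite zmulZNr.
Qed.

Lemma idealB m g x y : x \in EJideal m g -> y \in EJideal m g -> x - y \in EJideal m g.
Proof. by move=> hx hy; apply: idealD => //; apply: idealN. Qed.

Lemma mem_coset m g x y : (y \in EJcoset m g x) = (y - x \in EJideal m g).
Proof.
apply/imsetP/idP => [[i hi ->]|h]; first by rewrite addrC addKr.
by exists (y - x) => //; rewrite addrC subrK.
Qed.

Lemma coset_self m g x : x \in EJcoset m g x.
Proof. by rewrite mem_coset subrr ideal0. Qed.

Lemma coset_eq m g x y : y \in EJcoset m g x -> EJcoset m g y = EJcoset m g x.
Proof.
rewrite mem_coset => h; apply/setP => z; rewrite !mem_coset.
apply/idP/idP => hz.
  by have := idealD hz h; rewrite addrA subrK.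
by have := idealB hz h; rewrite opprB addrA subrK.
Qed.

Lemma card_coset m g x : #|EJcoset m g x| = #|EJideal m g|.
Proof. by rewrite card_imset //; apply: addrI. Qed.

Lemma znorm_ge0 p : 0 <= znorm p.
Proof.
case: p => a b; rewrite /znorm /=.
have E : 4 * (a ^+ 2 + a * b + b ^+ 2) = (2 * a + b) ^+ 2 + 3 * b ^+ 2 by ring.
have : 0 <= 4 * (a ^+ 2 + a * b + b ^+ 2).
  by rewrite E addr_ge0 // ?sqr_ge0 // mulr_ge0 // sqr_ge0.
by rewrite pmulr_rge0.
Qed.

Lemma absz_norm p : (`|znorm p|%N)%:Z = znorm p.
Proof. by rewrite gez0_abs // znorm_ge0. Qed.

Lemma zmul_conjA g x :
  zmul (zconj g) (zmul g x) = (znorm g * x.1, znorm g * x.2).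
Proof. by case: g x => [a b] [x y]; rewrite /zmul /zconj /znorm /=; congr pair; ring. Qed.

Lemma zmul_normN g w :
  (znorm g * w.1, znorm g * w.2) = zmul g (zmul (zconj g) w).
Proof. by case: g w => [a b] [x y]; rewrite /zmul /zconj /znorm /=; congr pair; ring. Qed.

Lemma zmul_cancel g x y : znorm g != 0 -> zmul g x = zmul g y -> x = y.
Proof.
move=> nz E.
have := zmul_conjA g x; rewrite E zmul_conjA => [[E1 E2]].
case: x y {E} E1 E2 => [x1 x2] [y1 y2] /= E1 E2.
by rewrite (mulfI nz E1) (mulfI nz E2).
Qed.

Lemma zr_to_eq m p q : (1 < m)%N -> zr_to m p = zr_to m q ->
  exists w : zr, p = (q.1 + m%:Z * w.1, q.2 + m%:Z * w.2).
Proof.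
move=> m1 E.
have : zr_to m (p.1 - q.1, p.2 - q.2) == 0 by rewrite zr_toB E subrr.
rewrite zr_to0 // => /andP [/dvdzP [w1 H1] /dvdzP [w2 H2]] /=.
exists (w1, w2) => /=; case: p H1 H2 {E} => a b /= H1 H2.
congr pair.
  by rewrite mulrC -H1 addrC subrK.
by rewrite mulrC -H2 addrC subrK.
Qed.

Lemma ideal_int m g p : (1 < m)%N -> m%:Z = znorm g ->
  (zr_to m p \in EJideal m g) <-> exists z, p = zmul g z.
Proof.
move=> m1 hm; split; last first.
  by move=> [z ->]; apply/mem_ideal; exists (zr_to _ z); rewrite zr_toM.
move=> /mem_ideal [y]; rewrite -(zr_to_lift y) -zr_toM => /(zr_to_eq m1) [w ->].
rewrite hm.
exists ((lift y).1 + (zmul (zconj g) w).1, (lift y).2 + (zmul (zconj g) w).2).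
by rewrite /zmul /zconj /znorm /=; congr pair; ring.
Qed.

Definition phi (n : nat) (R : 'Z_n) (p : zr) : 'Z_n := p.1%:~R + p.2%:~R * R.

Lemma phiM n (R : 'Z_n) p q : R ^+ 2 - R + 1 = 0 ->
  phi R (zmul p q) = phi R p * phi R q.
Proof.
move=> hR; case: p q => [a b] [x y]; rewrite /phi /zmul /=.
rewrite !(intrD, intrM, intrB, mulrNz).
have -> : (a%:~R + b%:~R * R) * (x%:~R + y%:~R * R) =
   a%:~R * x%:~R - b%:~R * y%:~R + (a%:~R * y%:~R + b%:~R * x%:~R + b%:~R * y%:~R) * R
   + b%:~R * y%:~R * (R ^+ 2 - R + 1) :> 'Z_n by ring.
by rewrite hR mulr0 addr0.
Qed.

Lemma phiD n (R : 'Z_n) p q : phi R (p.1 + q.1, p.2 + q.2) = phi R p + phi R q.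
Proof. by rewrite /phi /= !intrD; ring. Qed.

Lemma phi_mod n (R : 'Z_n) p q m : (1 < n)%N -> (n %| m)%N ->
  phi R (q.1 + m%:Z * p.1, q.2 + m%:Z * p.2) = phi R q.
Proof.
move=> n1 /dvdnP [k ->].
have h0 : ((k * n)%N%:Z%:~R : 'Z_n) = 0.
  by apply/eqP; rewrite intZp0 // PoszM dvdz_mull.
rewrite /phi /= !intrD !intrM. rewrite h0 !mul0r !addr0.
by [].
Qed.

Definition Psi (m n : nat) (R : 'Z_n) (x : ZR m) : 'Z_n := phi R (lift x).

Lemma Psi_zr_to m n (R : 'Z_n) p : (1 < m)%N -> (1 < n)%N -> (n %| m)%N ->
  Psi R (zr_to m p) = phi R p.
Proof.
move=> m1 n1 nm; rewrite /Psi.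
have := zr_to_lift (zr_to m p) => /(zr_to_eq m1) [w ->].
exact: phi_mod.
Qed.

Lemma PsiD m n (R : 'Z_n) (x y : ZR m) : (1 < m)%N -> (1 < n)%N -> (n %| m)%N ->
  Psi R (x + y) = Psi R x + Psi R y.
Proof.
move=> m1 n1 nm.
rewrite -{1}(zr_to_lift x) -{1}(zr_to_lift y) -zr_toD Psi_zr_to // phiD.
by [].
Qed.

Lemma PsiN m n (R : 'Z_n) (x : ZR m) : (1 < m)%N -> (1 < n)%N -> (n %| m)%N ->
  Psi R (- x) = - Psi R x.
Proof.
move=> m1 n1 nm; apply/eqP; rewrite -subr_eq0 opprK -PsiD // addNr.
by rewrite -(zr_to_lift 0) Psi_zr_to.
Qed.

Lemma PsiB m n (R : 'Z_n) (x y : ZR m) : (1 < m)%N -> (1 < n)%N -> (n %| m)%N ->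
  Psi R (x - y) = Psi R x - Psi R y.
Proof. by move=> *; rewrite PsiD // PsiN. Qed.

Lemma znorm_conj g : znorm (zconj g) = znorm g.
Proof. by case: g => a b; rewrite /znorm /zconj /=; ring. Qed.

Lemma zmulC p q : zmul p q = zmul q p.
Proof. by case: p q => [a b] [x y]; rewrite /zmul /=; congr pair; ring. Qed.

Lemma zmul_conj_self g : zmul (zconj g) (zmul g (1, 0)) = (znorm g, 0).
Proof. by rewrite zmul_conjA /= mulr1 mulr0. Qed.

Lemma norm_cast0 n (c' d' : int) : (1 < n)%N -> n%:Z = znorm (c', d') ->
  ((c'%:~R : 'Z_n) ^+ 2 + c'%:~R * d'%:~R + d'%:~R ^+ 2 = 0).
Proof.
move=> n1 hn.
have : ((znorm (c', d'))%:~R : 'Z_n) == 0 by rewrite intZp0 // hn.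
by rewrite /znorm /= !(intrD, intrM, rmorphXn) => /eqP.
Qed.

Lemma R_root n (C D U : 'Z_n) : C ^+ 2 + C * D + D ^+ 2 = 0 -> D * U = 1 ->
  (- (C * U)) ^+ 2 - (- (C * U)) + 1 = 0.
Proof.
move=> hN hU.
have -> : (- (C * U)) ^+ 2 - (- (C * U)) + 1 =
  U ^+ 2 * (C ^+ 2 + C * D + D ^+ 2) + C * U * (1 - D * U) + (1 - D * U) * (1 + D * U) by ring.
by rewrite hN hU subrr !mulr0 mul0r !addr0.
Qed.

Lemma phi_alpha n (c' d' : int) (U : 'Z_n) : d'%:~R * U = 1 ->
  phi (- (c'%:~R * U)) (c', d') = 0.
Proof.
move=> hU; rewrite /phi /=.
have -> : c'%:~R + d'%:~R * - (c'%:~R * U) = c'%:~R * (1 - d'%:~R * U) :> 'Z_n by ring.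
by rewrite hU subrr mulr0.
Qed.

Lemma phi_ker n (c' d' : int) (U : 'Z_n) p : (1 < n)%N -> n%:Z = znorm (c', d') ->
  d'%:~R * U = 1 -> phi (- (c'%:~R * U)) p = 0 -> exists z, p = zmul (c', d') z.
Proof.
move=> n1 hn hU hp.
have hN := norm_cast0 n1 hn.
set w := zmul (zconj (c', d')) p.
have w0 : zr_to n w = zr_to n (0, 0).
  rewrite /w /zr_to /zmul /zconj /= !(intrD, intrM, intrB, mulrNz) mulr0z.
  move: hp; rewrite /phi; case: p {w} => x1 x2 /= hp.
  set C := (c'%:~R : 'Z_n) in hN hU hp *; set D := (d'%:~R : 'Z_n) in hN hU hp *.
  set X1 := (x1%:~R : 'Z_n) in hp *; set X2 := (x2%:~R : 'Z_n) in hp *.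
  congr pair.
    have -> : (C + D) * X1 - - D * X2 =
      (X1 + X2 * - (C * U)) * (C + D) + X2 * U * (C ^+ 2 + C * D + D ^+ 2)
      + X2 * D * (1 - D * U) by ring.
    by rewrite hp hN hU subrr !mulr0 mul0r !addr0.
  have -> : (C + D) * X2 + - D * X1 + - D * X2 =
      - ((X1 + X2 * - (C * U)) * D) + X2 * C * (1 - D * U) by ring.
  by rewrite hp hU subrr mulr0 mul0r oppr0 addr0.
have [v] := zr_to_eq n1 w0; rewrite /= !add0r => hw.
exists v; apply: (@zmul_cancel (zconj (c', d'))).
  by rewrite znorm_conj -hn; lia.
rewrite -/w hw zmul_conjA -hn; case: v {hw} => v1 v2 //.
Qed.

Lemma ideal_psi n (c' d' : int) (U : 'Z_n) (x : ZR n) : (1 < n)%N ->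
  n%:Z = znorm (c', d') -> d'%:~R * U = 1 ->
  (x \in EJideal n (c', d')) = (Psi (- (c'%:~R * U)) x == 0).
Proof.
move=> n1 hn hU.
rewrite -{1}(zr_to_lift x); apply/idP/idP.
  move/(ideal_int _ n1 hn) => [z hz].
  rewrite /Psi hz phiM ?phi_alpha ?mul0r //.
  by apply: R_root hU; apply: norm_cast0.
move/eqP => h; apply/(ideal_int _ n1 hn).
exact: (phi_ker n1 hn hU h).
Qed.

Lemma card_ker m (W : finType) (w0 : W) (h : ZR m -> W) :
  (forall x y, (h y == h x) = (h (y - x) == w0)) ->
  #|[set: ZR m]| = (#|h @: [set: ZR m]| * #|[set y | h y == w0]|)%N.
Proof.
move=> hB; apply: card_fibers => x _.
have -> : [set y in [set: ZR m] | h y == h x] = [set x + k | k in [set y | h y == w0]].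
  apply/setP => y; rewrite !inE hB; apply/idP/imsetP.
    move=> e; exists (y - x); first by rewrite inE.
    by rewrite addrC subrK.
  by move=> [k]; rewrite inE => hk ->; rewrite addrC addKr.
by rewrite card_imset //; apply: addrI.
Qed.

Definition mulby m (g : zr) (z : ZR m) : ZR m := zmulZ m (zr_to m g) z.
Definition zsig m (x : ZR m) : ZR m := (x.1 + x.2, - x.2).
Arguments zsig {m}.

Lemma card_ZR m : (1 < m)%N -> #|[set: ZR m]| = (m * m)%N.
Proof. by move=> m1; rewrite cardsT card_prod card_ord Zp_cast. Qed.

Lemma ideal_img m g : EJideal m g = mulby g @: [set: ZR m].
Proof. by apply/setP => x; apply/imsetP/imsetP => [[z _ ->]|[z _ ->]]; exists z. Qed.

Lemma ker_mulby m g : (1 < m)%N -> m%:Z = znorm g ->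
  [set y : ZR m | mulby g y == 0] = mulby (zconj g) @: [set: ZR m].
Proof.
move=> m1 hm; apply/setP => y; rewrite inE; apply/eqP/imsetP.
  rewrite /mulby -(zr_to_lift y) -(@zr_toM m g (lift y)) -(zr_to_lift 0) => /(zr_to_eq m1) [w].
  have nz : znorm g != 0 by rewrite -hm; lia.
  rewrite /= hm !add0r zmul_normN => /(zmul_cancel nz) h.
  exists (zr_to m w); first by rewrite inE.
  by rewrite h zr_toM.
move=> [z _ ->]; rewrite /mulby zmulZA -zr_toM zmulC.
have -> : zmul (zconj g) g = (znorm g, 0).
  by case: g {hm} => a b; rewrite /zmul /zconj /znorm /=; congr pair; ring.
apply/eqP; rewrite /zmulZ /zr_to /= -hm.
have -> : ((m%:Z)%:~R : 'Z_m) = 0 by apply/eqP; rewrite intZp0.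
by rewrite mulr0z !mul0r !addr0 subr0.
Qed.

Lemma zsig_mulby m g (z : ZR m) : zsig (mulby g z) = mulby (zconj g) (zsig z).
Proof.
case: g z => a b [x y]; rewrite /zsig /mulby /zmulZ /zr_to /zconj /=.
by congr pair; rewrite ?(intrD, intrM, intrB, mulrNz); ring.
Qed.

Lemma zsigK m : involutive (@zsig m).
Proof. by case=> a b; rewrite /zsig /=; congr pair; ring. Qed.

Lemma card_ideal m g : (1 < m)%N -> m%:Z = znorm g -> #|EJideal m g| = m.
Proof.
move=> m1 hm.
have h := @card_ker m ('Z_m * 'Z_m)%type (0 : ZR m) (mulby g).
rewrite card_ZR // ker_mulby // in h.
have e : mulby (zconj g) @: [set: ZR m] = zsig @: (mulby g @: [set: ZR m]).
  rewrite -imset_comp; apply/setP => x; apply/imsetP/imsetP => [[z _ ->]|[z _ ->]].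
    by exists (zsig z); [rewrite inE | rewrite /= zsig_mulby zsigK].
  by exists (zsig z); [rewrite inE | rewrite /= zsig_mulby].
rewrite e card_imset in h; last exact: (can_inj (@zsigK m)).
rewrite ideal_img; move: h; set X := #|_| => h.
suff e2 : (m * m = X * X)%N by clear -e2; nia.
apply: h => x y; rewrite /mulby -subr_eq0 -zmulZNr -zmulZDr addrC.
by [].
Qed.

Definition Lc : seq zr := [:: (1,0); (-1,0); (0,1); (0,-1); (-1,1); (1,-1)].

Lemma EJconnE m e : (e \in EJconn m) = (e \in map (zr_to m) Lc).
Proof. by rewrite /EJconn inE. Qed.

Lemma phi_Lc n (R : 'Z_n) : map (phi R) Lc = [:: 1; -1; R; -R; -1 + R; -(-1 + R)].
Proof.
rewrite /phi /= ?(mulr1z, mulrN1z, mulr0z, mul0r, mul1r, mulN1r, addr0, add0r).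
by congr [:: _; _; _; _; _; _]; rewrite opprD opprK addrC.
Qed.

Lemma TLconnE n (R : 'Z_n) x :
  (x \in TLconn n 1 R (-1 + R)) = (x \in map (phi R) Lc).
Proof. by rewrite phi_Lc /TLconn !inE; rewrite !orbA. Qed.

Lemma conn_Psi m n (R : 'Z_n) (e : ZR m) : (1 < m)%N -> (1 < n)%N -> (n %| m)%N ->
  e \in EJconn m -> Psi R e \in TLconn n 1 R (-1 + R).
Proof.
move=> m1 n1 nm; rewrite EJconnE => /mapP [p pin ->].
by rewrite Psi_zr_to // TLconnE map_f.
Qed.

Lemma conn_Psi_inv m n (R : 'Z_n) w : (1 < m)%N -> (1 < n)%N -> (n %| m)%N ->
  w \in TLconn n 1 R (-1 + R) -> exists2 e : ZR m, e \in EJconn m & Psi R e = w.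
Proof.
move=> m1 n1 nm; rewrite TLconnE => /mapP [p pin ->].
exists (zr_to m p); first by rewrite EJconnE map_f.
by rewrite Psi_zr_to.
Qed.

Lemma Psi_same n (R : 'Z_n) (x : ZR n) : Psi R x = x.1 + x.2 * R.
Proof. by rewrite /Psi /phi /lift /= -!pmulrn !natr_Zp. Qed.

Lemma iso_part (c' d' : int) (U : 'Z_`|znorm (c', d')|) :
  (1 < `|znorm (c', d')|)%N -> d'%:~R * U = 1 ->
  isomorphic (TL `|znorm (c', d')| 1 (- (c'%:~R * U)) (-1 + - (c'%:~R * U)))
             (EJ (c', d')).
Proof.
set n := `|znorm (c', d')|%N => n1 hU.
have hn : n%:Z = znorm (c', d') by rewrite absz_norm.
set R := - (c'%:~R * U).
have memI x : (x \in EJideal n (c', d')) = (Psi R x == 0) by exact: ideal_psi.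
have memC x y : (y \in EJcoset n (c', d') x) = (Psi R y == Psi R x).
  by rewrite mem_coset memI PsiB // subr_eq0.
have Psi0 k : Psi R ((k, 0) : ZR n) = k by rewrite Psi_same mul0r addr0.
exists (fun k : 'Z_n => EJcoset n (c', d') (k, 0)); split.
- move=> u v _ _ /= e.
  have : ((u, 0) : ZR n) \in EJcoset n (c', d') (v, 0) by rewrite -e coset_self.
  by rewrite memC !Psi0 => /eqP.
- apply/setP => C; apply/imsetP/imsetP => [[k _ ->]|[x _ ->]].
    by exists ((k, 0) : ZR n).
  exists (Psi R x) => //; apply/esym/coset_eq.
  by rewrite memC Psi0.
- move=> u v _ _ /=; apply/existsP/idP => [[x /existsP [y /and3P [hx hy hc]]]|h].
    move: hx hy; rewrite !memC !Psi0 => /eqP <- /eqP <-.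
    by rewrite -PsiB //; apply: conn_Psi.
  have [e he ee] := @conn_Psi_inv n n R (v - u) n1 n1 (dvdnn n) h.
  exists (u, 0); apply/existsP; exists ((u, 0) + e).
  rewrite coset_self memC PsiD // !Psi0 ee addrC subrK eqxx /=.
  by rewrite addrC addKr.
Qed.

Lemma norm_scale (l : nat) (c' d' : int) :
  znorm (l%:Z * c', l%:Z * d') = (l * l)%N%:Z * znorm (c', d').
Proof. by rewrite /znorm /= PoszM; ring. Qed.

Lemma zmod_aux (V : zmodType) (y1 y2 x1 x2 x : V) :
  y1 - x1 = y2 - x2 -> y1 - y2 = (x1 - x) - (x2 - x).
Proof.
move=> h; have -> : y1 = y2 - x2 + x1 by rewrite -h subrK.
rewrite addrAC [y2 - x2 - y2]addrAC subrr add0r opprB subrKA addrC.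
by [].
Qed.

Lemma cover_part (c d c' d' : int) (l : nat) (U : 'Z_`|znorm (c', d')|) :
  (1 < `|znorm (c', d')|)%N -> d'%:~R * U = 1 -> (0 < l)%N ->
  c = l%:Z * c' -> d = l%:Z * d' ->
  uniq [:: 1; -1; - (c'%:~R * U); - - (c'%:~R * U); -1 + - (c'%:~R * U);
          - (-1 + - (c'%:~R * U))] ->
  covers (EJ (c, d)) (TL `|znorm (c', d')| 1 (- (c'%:~R * U)) (-1 + - (c'%:~R * U)))
    (l ^ 2)%N.
Proof.
set n := `|znorm (c', d')|%N => n1 hU l0 hc hd hu.
have hn : n%:Z = znorm (c', d') by rewrite absz_norm.
set R := - (c'%:~R * U).
set m := `|znorm (c, d)|%N.
have hm : m%:Z = znorm (c, d) by rewrite absz_norm.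
have hmn : m = (l * l * n)%N.
  by apply/eqP; rewrite -eqz_nat hm hc hd norm_scale -hn !PoszM.
have m1 : (1 < m)%N by rewrite hmn; nia.
have nm : (n %| m)%N by rewrite hmn dvdn_mull.
have phig : phi R (c, d) = 0.
  rewrite hc hd /phi /= !intrM -mulrA -mulrDr.
  by have := phi_alpha c' hU; rewrite /phi /= => ->; rewrite mulr0.
have PsiI x : x \in EJideal m (c, d) -> Psi R x = 0.
  move=> /mem_ideal [z ->]; rewrite -(zr_to_lift z) -zr_toM Psi_zr_to //.
  rewrite phiM ?phig ?mul0r //.
  by apply: R_root hU; apply: norm_cast0.
have memC x y : y \in EJcoset m (c, d) x -> Psi R y = Psi R x.
  by rewrite mem_coset => /PsiI; rewrite PsiB // => /eqP; rewrite subr_eq0 => /eqP.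
pose f (C : {set ZR m}) := Psi R (repr C).
have fE x : f (EJcoset m (c, d) x) = Psi R x.
  by apply: memC; apply: (mem_repr x); apply: coset_self.
have PsiS (w : 'Z_n) : Psi R (zr_to m (lift ((w, 0) : ZR n))) = w.
  by rewrite Psi_zr_to // -/(Psi R _) Psi_same mul0r addr0.
have injC e1 e2 : e1 \in EJconn m -> e2 \in EJconn m -> Psi R e1 = Psi R e2 -> e1 = e2.
  rewrite !EJconnE => /mapP [p1 p1in ->] /mapP [p2 p2in ->].
  rewrite !Psi_zr_to // => E; congr (zr_to m _).
  by apply: (uniq_map_inj _ p1in p2in E); rewrite phi_Lc.
exists f; split.
- apply/setP => w; rewrite inE; apply/imsetP.
  exists (EJcoset m (c, d) (zr_to m (lift ((w, 0) : ZR n)))).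
    by apply/imsetP; exists (zr_to m (lift ((w, 0) : ZR n))).
  by rewrite fE PsiS.
- move=> v /imsetP [x _ ->]; split.
    apply/setP => w; rewrite /nbhd !inE /=; apply/imsetP/idP.
      move=> [D]; rewrite inE => /andP [/imsetP [z _ ->]].
      move=> /existsP [x1 /existsP [y /and3P [hx hy hc']]] ->.
      rewrite !fE -(memC _ _ hx) -(memC _ _ hy) -PsiB //.
      exact: conn_Psi.
    move=> hw; have [e he ee] := @conn_Psi_inv m n R (w - f (EJcoset m (c, d) x)) m1 n1 nm hw.
    exists (EJcoset m (c, d) (x + e)).
      rewrite inE; apply/andP; split; first by apply/imsetP; exists (x + e).
      apply/existsP; exists x; apply/existsP; exists (x + e).
      by rewrite !coset_self addrC addKr he.
    by rewrite fE PsiD // ee fE addrC subrK.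
  move=> D1 D2; rewrite /nbhd !inE /=.
  move=> /andP [/imsetP [z1 _ ->] /existsP [x1 /existsP [y1 /and3P [hx1 hy1 hc1]]]].
  move=> /andP [/imsetP [z2 _ ->] /existsP [x2 /existsP [y2 /and3P [hx2 hy2 hc2]]]].
  rewrite !fE => E.
  have ee : y1 - x1 = y2 - x2.
    apply: injC => //; rewrite !PsiB // (memC _ _ hx1) (memC _ _ hx2).
    by rewrite (memC _ _ hy1) (memC _ _ hy2) E.
  rewrite -(coset_eq hy1) -(coset_eq hy2); apply: coset_eq.
  rewrite mem_coset.
  rewrite (zmod_aux x ee).
  rewrite mem_coset in hx1; rewrite mem_coset in hx2.
  by rewrite idealB.
- move=> w _.
  have Zcard : #|[set: 'Z_n]| = n by rewrite cardsT card_ord Zp_cast.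
  have hK := @card_ker m 'Z_n 0 (Psi R).
  have surj : Psi R @: [set: ZR m] = [set: 'Z_n].
    apply/setP => u; rewrite inE; apply/imsetP.
    by exists (zr_to m (lift ((u, 0) : ZR n))); rewrite ?inE ?PsiS.
  rewrite card_ZR // surj Zcard in hK.
  have hB : forall x y : ZR m, (Psi R y == Psi R x) = (Psi R (y - x) == 0).
    by move=> x y; rewrite PsiB // subr_eq0.
  have {hK hB} hK := hK hB.
  move: hK; set K := [set y | Psi R y == 0] => hK.
  set x0 := zr_to m (lift ((w, 0) : ZR n)).
  set P := [set y : ZR m | Psi R y == w].
  have hP : #|P| = #|K|.
    have -> : P = [set x0 + k | k in K].
      apply/setP => y; rewrite !inE; apply/idP/imsetP.
        move=> /eqP hy; exists (y - x0); first by rewrite inE PsiB // hy PsiS subrr.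
        by rewrite addrC subrK.
      by move=> [k]; rewrite inE => /eqP hk ->; rewrite PsiD // hk addr0 PsiS.
    by rewrite card_imset //; apply: addrI.
  have hF : #|P| = (#|EJcoset m (c, d) @: P| * m)%N.
    apply: card_fibers => x; rewrite inE => /eqP hx.
    have -> : [set y in P | EJcoset m (c, d) y == EJcoset m (c, d) x] = EJcoset m (c, d) x.
      apply/setP => y; rewrite !inE; apply/andP/idP => [[_ /eqP <-]|hy].
        exact: coset_self.
      by rewrite (memC _ _ hy) hx (coset_eq hy).
    by rewrite card_coset card_ideal.
  have img : EJcoset m (c, d) @: P = [set v in gV (EJ (c, d)) | f v == w].
    apply/setP => v; rewrite inE; apply/imsetP/andP => [[y]|[/imsetP [y _ ->]]].
      rewrite inE => /eqP hy ->; split; first by apply/imsetP; exists y.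
      by rewrite fE hy.
    by rewrite fE => hy; exists y; rewrite // inE.
  rewrite -img; move: hF; rewrite hP; set F := #|EJcoset m (c, d) @: P| => hF.
  have m0 : (0 < m)%N by lia.
  rewrite expnS expn1.
  have e1 : m = (n * F)%N.
    by apply/eqP; rewrite -(eqn_pmul2r m0) hK hF mulnA.
  rewrite hmn in e1.
  have n0 : (0 < n)%N by lia.
  by apply/eqP; rewrite -(eqn_pmul2l n0) -e1 mulnC.
Qed.

Lemma unit_of_inv (T : comUnitRingType) (x y : T) : x * y = 1 -> x \is a GRing.unit.
Proof. by move=> h; apply/unitrPr; exists y. Qed.

Lemma unit_neq (T : comUnitRingType) (x y : T) : (x - y) \is a GRing.unit -> (x == y) = false.
Proof.
move=> u; apply/negbTE/eqP => e; move: u; rewrite e subrr.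
by rewrite unitr0.
Qed.

Lemma R_units (T : comUnitRingType) (R : T) :
  R ^+ 2 - R + 1 = 0 -> (2 : T) \is a GRing.unit -> (3 : T) \is a GRing.unit ->
  [/\ R \is a GRing.unit, (1 - R) \is a GRing.unit, (1 + R) \is a GRing.unit,
      (2 - R) \is a GRing.unit & (2 * R - 1) \is a GRing.unit].
Proof.
move=> hR u2 u3.
have i3 : (3 : T) * 3^-1 = 1 by rewrite divrr.
split.
- apply: (@unit_of_inv _ _ (1 - R)).
  have -> : R * (1 - R) = 1 - (R ^+ 2 - R + 1) + 0 by ring.
  by rewrite hR subr0 addr0.
- apply: (@unit_of_inv _ _ R).
  have -> : (1 - R) * R = 1 - (R ^+ 2 - R + 1) + 0 by ring.
  by rewrite hR subr0 addr0.
- apply: (@unit_of_inv _ _ ((2 - R) * 3^-1)).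
  have -> : (1 + R) * ((2 - R) * 3^-1) = (3 * 3^-1) - (R ^+ 2 - R + 1) * 3^-1 by ring.
  by rewrite hR mul0r subr0.
- apply: (@unit_of_inv _ _ ((1 + R) * 3^-1)).
  have -> : (2 - R) * ((1 + R) * 3^-1) = (3 * 3^-1) - (R ^+ 2 - R + 1) * 3^-1 by ring.
  by rewrite hR mul0r subr0.
- apply: (@unit_of_inv _ _ ((2 * R - 1) * - 3^-1)).
  have -> : (2 * R - 1) * ((2 * R - 1) * - 3^-1) = (3 * 3^-1) - 4 * (R ^+ 2 - R + 1) * 3^-1 by ring.
  by rewrite hR mulr0 mul0r subr0.
Qed.

Lemma uniq6 (T : comUnitRingType) (R : T) :
  R ^+ 2 - R + 1 = 0 -> (2 : T) \is a GRing.unit -> (3 : T) \is a GRing.unit ->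
  uniq [:: 1; -1; R; -R; -1 + R; -(-1 + R)].
Proof.
move=> hR u2 u3; have [uR u1R up1 u2R u2R1] := R_units hR u2 u3.
have uN (x : T) : x \is a GRing.unit -> - x \is a GRing.unit by move=> h; rewrite unitrN.
have u2x (x : T) : x \is a GRing.unit -> 2 * x \is a GRing.unit.
  by move=> h; rewrite unitrMl.
have E (x y z : T) : x - y = z -> z \is a GRing.unit -> (x == y) = false.
  by move=> e hz; apply: unit_neq; rewrite e.
rewrite /= !inE.
rewrite (E 1 (-1) 2) //; last by ring.
rewrite (E 1 R (1 - R)) //.
rewrite (E 1 (- R) (1 + R)) //; last by ring.
rewrite (E 1 (-1 + R) (2 - R)) //; last by ring.
rewrite (E 1 (- (-1 + R)) R) //; last by ring.
rewrite (E (-1) R (- (1 + R))) ?uN //; last by ring.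
rewrite (E (-1) (- R) (- (1 - R))) ?uN //; last by ring.
rewrite (E (-1) (-1 + R) (- R)) ?uN //; last by ring.
rewrite (E (-1) (- (-1 + R)) (- (2 - R))) ?uN //; last by ring.
rewrite (E R (- R) (2 * R)) ?u2x //; last by ring.
rewrite (E R (-1 + R) 1) ?unitr1 //; last by ring.
rewrite (E R (- (-1 + R)) (2 * R - 1)) //; last by ring.
rewrite (E (- R) (-1 + R) (- (2 * R - 1))) ?uN //; last by ring.
rewrite (E (- R) (- (-1 + R)) (- 1)) ?uN ?unitr1 //; last by ring.
rewrite (E (-1 + R) (- (-1 + R)) (- (2 * (1 - R)))) ?uN ?u2x //; last by ring.
Qed.

Lemma frob_gen n (H : {group {unit 'Z_n}}) (mneg : {unit 'Z_n}) :
  (2 : 'Z_n) \is a GRing.unit -> mneg \in H -> val mneg = -1 ->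
  (forall m, m \in H -> val m = 1 \/ (val m - 1) \is a GRing.unit) ->
  frobenius_ZnH n H.
Proof.
move=> u2 negH negE hH; split.
- move=> x z; exists (z - x), 1%g; split; first exact: group1.
  by rewrite /sdact; change ((x + (z - x)) * 1 = z); rewrite mulr1 addrC subrK.
- exists 0, mneg, 0; split => //; first by rewrite /sdact addr0 mul0r.
  exists 1; rewrite /sdact addr0 mul1r negE; apply/negbT/unit_neq.
  by rewrite -opprD unitrN.
- move=> y m mH x1 x2 neq f1 f2 x; rewrite /sdact in f1 f2 *.
  case: (hH m mH) => [e1|um].
    rewrite e1 mulr1 in f1 *.
    have -> : y = 0 by apply: (@addrI _ x1); rewrite f1 addr0.
    by rewrite addr0 mulr1.
  have e : (x1 - x2) * (val m - 1) = 0.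
    have -> : (x1 - x2) * (val m - 1) = ((x1 + y) * val m - x1) - ((x2 + y) * val m - x2) by ring.
    by rewrite f1 f2 !subrr.
  have : x1 - x2 = 0 by rewrite -(mulrK um (x1 - x2)) e mul0r.
  by move/eqP; rewrite subr_eq0 (negbTE neq).
- move=> y m mH; split.
    case: (hH m mH) => [e1|um].
      by move=> _; exists y => x; rewrite /sdact e1 mulr1.
    case=> [idm|fpf].
      have y0 : y = 0.
        by have := idm (- y); rewrite /sdact addNr mul0r => /eqP; rewrite eq_sym oppr_eq0 => /eqP.
      have := idm 1; rewrite /sdact y0 addr0 mul1r => m1.
      by move: um; rewrite m1 subrr unitr0.
    set M := val m in um *.
    set x0 := (- (y * M)) / (M - 1).
    have hx0 : x0 * (M - 1) = - (y * M) by rewrite /x0 divrK.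
    have := fpf x0; rewrite /sdact -/M.
    have -> : (x0 + y) * M = x0 + (x0 * (M - 1) + y * M) by ring.
    by rewrite hx0 addNr addr0 eqxx.
  move=> [t ht]; case: (eqVneq t 0) => [t0|tn0].
    by left => x; rewrite ht t0 addr0.
  right => x; rewrite ht; apply/eqP => e.
  have t0 : t = 0 by apply: (@addrI _ x); rewrite e addr0.
  by move: tn0; rewrite t0 eqxx.
Qed.

Lemma frob_part n (R : 'Z_n) :
  R ^+ 2 - R + 1 = 0 -> (2 : 'Z_n) \is a GRing.unit -> (3 : 'Z_n) \is a GRing.unit ->
  frob_first_kind_circ n 1 R (-1 + R).
Proof.
move=> hR u2 u3; have [uR u1R up1 u2R u2R1] := R_units hR u2 u3.
have huq := uniq6 hR u2 u3.
have hR2 : R * R = -1 + R.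
  have -> : R * R = (R ^+ 2 - R + 1) + (-1 + R) by ring.
  by rewrite hR add0r.
have TLE x : (x \in TLconn n 1 R (-1 + R)) = (x \in [:: 1; -1; R; -R; -1 + R; -(-1 + R)]).
  by rewrite TLconnE phi_Lc.
have pow i : R ^+ i \in TLconn n 1 R (-1 + R).
  rewrite TLE; elim: i => [|i IH]; first by rewrite expr0 !inE eqxx.
  rewrite exprS; move: IH; rewrite !inE.
  move=> /orP [/eqP->|/orP [/eqP->|/orP [/eqP->|/orP [/eqP->|/orP [/eqP->|/eqP->]]]]].
  - by rewrite mulr1 eqxx !orbT.
  - by rewrite mulrN1 eqxx !orbT.
  - by rewrite hR2 eqxx !orbT.
  - by rewrite mulrN hR2 eqxx !orbT.
  - have -> : R * (-1 + R) = -1 by rewrite mulrDr hR2 mulrN1 addrCA addNr addr0.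
    by rewrite eqxx !orbT.
  - have -> : R * - (-1 + R) = 1 by rewrite mulrN mulrDr hR2 mulrN1 addrCA addNr addr0 opprK.
    by rewrite eqxx.
pose u : {unit 'Z_n} := FinRing.unit 'Z_n uR.
have valu : val u = R by [].
have valp i : val (u ^+ i)%g = R ^+ i by rewrite FinRing.val_unitX.
have hR3 : R ^+ 3 = -1.
  by rewrite exprS expr2 hR2 mulrDr hR2 mulrN1 addrCA addNr addr0.
exists <[u]>%G, 1.
set sH := [set _ | _ in _].
have sHE : sH = TLconn n 1 R (-1 + R).
  apply/setP => x; apply/imsetP/idP.
    by move=> [h /cycleP [i ->] ->]; rewrite mul1r valp pow.
  have P6 : forall i, (exists2 h, h \in <[u]>%G & R ^+ i = 1 * val h).
    by move=> i; exists (u ^+ i)%g; [exact: mem_cycle | rewrite mul1r valp].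
  rewrite TLE !inE.
  have e4 : R ^+ 4 = - R by rewrite exprSr hR3 mulN1r.
  have e5 : R ^+ 5 = - (-1 + R) by rewrite exprSr e4 mulNr hR2.
  have e2 : R ^+ 2 = -1 + R by rewrite expr2 hR2.
  move=> /orP [/eqP->|/orP [/eqP->|/orP [/eqP->|/orP [/eqP->|/orP [/eqP->|/eqP->]]]]].
  - by rewrite -(expr0 R); apply: P6.
  - by rewrite -hR3; apply: P6.
  - by rewrite -(expr1 R); apply: P6.
  - by rewrite -e4; apply: P6.
  - by rewrite -e2; apply: P6.
  - by rewrite -e5; apply: P6.
split.
- apply: (@frob_gen n <[u]>%G (u ^+ 3)%g u2).
  + exact: mem_cycle.
  + by rewrite valp hR3.
  + move=> m /cycleP [i ->]; rewrite valp.
    have := pow i; rewrite TLE !inE.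
    move=> /orP [/eqP->|/orP [/eqP->|/orP [/eqP->|/orP [/eqP->|/orP [/eqP->|/eqP->]]]]].
    * by left.
    * by right; rewrite -opprD unitrN.
    * by right; rewrite -opprB unitrN.
    * by right; rewrite -opprD unitrN addrC.
    * right; have -> : -1 + R - 1 = - (2 - R) by ring.
      by rewrite unitrN.
    * right; have -> : - (-1 + R) - 1 = - R by ring.
      by rewrite unitrN.
- exact: sHE.
- apply/eqP; rewrite eqEsubset subsetT /= Zp_cycle cycle_subG.
  by apply: mem_gen; rewrite sHE TLE !inE eqxx.
- left.
  have -> : #|<[u]>%G| = #|sH|.
    by rewrite card_imset //; move=> a b; rewrite !mul1r => /val_inj.
  rewrite sHE (_ : #|TLconn n 1 R (-1 + R)| = 6%N) //.
  rewrite (eq_card (TLE)).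
  by apply/card_uniqP.
Qed.

Lemma norm5 (x y : int) : x * x + x * y + y * y = 5 -> False.
Proof.
move=> H.
have h4 : (2*x+y)*(2*x+y) + 3*(y*y) = 20.
  by have -> : (20 : int) = 4 * 5 by []; rewrite -H; ring.
have s1 : 0 <= (2*x+y)*(2*x+y) by rewrite -expr2 sqr_ge0.
have s2 : 0 <= y*y by rewrite -expr2 sqr_ge0.
have yy : y * y <= 6 by lia.
have uu : (2*x+y)*(2*x+y) <= 20 by lia.
have hy : -2 <= y <= 2 by apply/andP; split; nia.
have hu : -4 <= 2*x+y <= 4 by apply/andP; split; nia.
have hx : -3 <= x <= 3 by lia.
have : y = -2 \/ y = -1 \/ y = 0 \/ y = 1 \/ y = 2 by lia.
move=> hy'; have : x = -3 \/ x = -2 \/ x = -1 \/ x = 0 \/ x = 1 \/ x = 2 \/ x = 3 by lia.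
move=> hx'.
case: hy' => [->|[->|[->|[->|->]]]] in H *;
  case: hx' => [->|[->|[->|[->|[->|[->|->]]]]]] in H *; lia.
Qed.

Lemma norm1 (x y : int) : x * x + x * y + y * y = 1 -> exists j, (x, y) = zpow zrho j.
Proof.
move=> H.
have h4 : (2*x+y)*(2*x+y) + 3*(y*y) = 4.
  have -> : (2*x+y)*(2*x+y) + 3*(y*y) = 4 * (x * x + x * y + y * y) by ring.
  by rewrite H.
have s1 : 0 <= (2*x+y)*(2*x+y) by rewrite -expr2 sqr_ge0.
have s2 : 0 <= y*y by rewrite -expr2 sqr_ge0.
have yy : y * y <= 1 by lia.
have uu : (2*x+y)*(2*x+y) <= 4 by lia.
have hy : -1 <= y <= 1 by apply/andP; split; nia.
have hu : -2 <= 2*x+y <= 2 by apply/andP; split; nia.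
have hx : -1 <= x <= 1 by lia.
have : y = -1 \/ y = 0 \/ y = 1 by lia.
move=> hy'; have : x = -1 \/ x = 0 \/ x = 1 by lia.
move=> hx'.
case: hy' => [->|[->|->]] in H *; case: hx' => [->|[->|->]] in H *;
  try (exfalso; lia).
- by exists 4%N.
- by exists 5%N.
- by exists 3%N.
- by exists 0%N.
- by exists 2%N.
- by exists 1%N.
Qed.

Unset Implicit Arguments.

Theorem corollary4p2 (c d : int) :
  (7 <= znorm (c, d)) ->
  (znorm (c, d) %% 6)%Z = 1 ->
  ~ (exists z : int, zassoc (c, d) (z, 0)) ->
  let l := gcdn `|c| `|d| in
  let alpha' : zr := ((c %/ l%:Z)%Z, (d %/ l%:Z)%Z) in
  exists (n : nat) (a b e : 'Z_n),
    [/\ (7 <= n)%N,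
        uniq [:: a; -a; b; -b; e; -e],
        frob_first_kind_circ n a b e,
        covers (EJ (c, d)) (TL n a b e) (l ^ 2)%N
      & isomorphic (TL n a b e) (EJ alpha')].
Proof.
move=> h7 h6 hna l alpha'.
set c' := (c %/ l%:Z)%Z; set d' := (d %/ l%:Z)%Z.
have l0 : (0 < l)%N.
  have : gcdz c d != 0.
    rewrite gcdz_eq0; apply/negP => /andP [/eqP c0 /eqP d0].
    by move: h7; rewrite c0 d0 /znorm /= !mul0r expr0n /= !addr0.
  by rewrite /gcdz -/l; lia.
have hc : c = l%:Z * c' by rewrite /c' mulrC divzK //; exact: dvdz_gcdl.
have hd : d = l%:Z * d' by rewrite /d' mulrC divzK //; exact: dvdz_gcdr.
have [u [v huv]] := Bezoutz c d.
have huv' : u * c + v * d = l%:Z := huv.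
rewrite {1}hc {1}hd in huv'.
have hab : u * c' + v * d' = 1.
  apply: (@mulfI _ (l%:Z)); first by lia.
  by rewrite mulr1 -[in RHS]huv'; ring.
set n := `|znorm (c', d')|%N.
have hn : n%:Z = znorm (c', d') by rewrite absz_norm.
have hN : znorm (c, d) = (l * l * n)%N%:Z by rewrite hc hd norm_scale -hn PoszM.
have hX : ((l * l * n) %% 6)%N = 1%N.
  by move: h6; rewrite hN modz_nat => -[].
have n2 : ~~ (2 %| n)%N.
  apply/negP => h; have : (2 %| l * l * n)%N by rewrite dvdn_mull.
  by move: hX; clear; lia.
have n3 : ~~ (3 %| n)%N.
  apply/negP => h; have : (3 %| l * l * n)%N by rewrite dvdn_mull.
  by move: hX; clear; lia.
have n1' : n <> 1%N.
  move=> e1; apply: hna; have : znorm (c', d') = 1 by rewrite -hn e1.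
  rewrite /znorm /= expr2 [d' ^+ 2]expr2 => /norm1 [j hj].
  exists l%:Z, j; rewrite /zassoc -hj hc hd /zmul /=.
  by congr pair; ring.
have n5 : n <> 5%N.
  move=> e5; have : znorm (c', d') = 5 by rewrite -hn e5.
  by rewrite /znorm /= expr2 [d' ^+ 2]expr2 => /norm5.
have n7 : (7 <= n)%N by clear -n2 n3 n1' n5; lia.
have n1 : (1 < n)%N by lia.
have u2 : (2 : 'Z_n) \is a GRing.unit.
  by rewrite (unitZpE 2 n1) coprime_sym prime_coprime.
have u3 : (3 : 'Z_n) \is a GRing.unit.
  by rewrite (unitZpE 3 n1) coprime_sym prime_coprime.
set U : 'Z_n := (- (u ^+ 2 * (c' + d')) + 2 * u * v * c' + v ^+ 2 * d')%:~R.
have hN0 := norm_cast0 n1 hn.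
have hab' : (u%:~R * c'%:~R + v%:~R * d'%:~R : 'Z_n) = 1.
  by rewrite -!intrM -intrD hab.
have hU : d'%:~R * U = 1.
  rewrite /U !(intrD, intrM, mulrNz, rmorphXn).
  set A := (u%:~R : 'Z_n) in hab' *; set B := (v%:~R : 'Z_n) in hab' *.
  set C := (c'%:~R : 'Z_n) in hN0 hab' *; set D := (d'%:~R : 'Z_n) in hN0 hab' *.
  have -> : D * (- (A ^+ 2 * (C + D)) + 2%:~R * A * B * C + B ^+ 2 * D) =
    (A * C + B * D) ^+ 2 - A ^+ 2 * (C ^+ 2 + C * D + D ^+ 2) by ring.
  by rewrite hab' hN0 mulr0 subr0 expr1n.
have hR := R_root hN0 hU.
set R := - (c'%:~R * U).
have huq := uniq6 hR u2 u3.
exists n, 1, R, (-1 + R); split => //.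
- exact: frob_part hR u2 u3.
- exact: (cover_part n1 hU l0 hc hd huq).
- exact: (iso_part n1 hU).
Qed.
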